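(* Let $X$ be a strongly connected finite digraph with $\delta(X)=0$. Then there exists a nonzero integer $m(X)$ such that $$g_X^*(1)=m(X)\cdot\#\mathrm{BF}(X)_{\rm tors}.$$
   Context: A digraph $X=(V_X,E_X)$ has incidence map $e\mapsto(o(e),t(e))$; it is strongly connected if for any two distinct vertices there is a directed path from the first to the second. For finite $X$: $\mathcal{A}_X:\mathbb{Z}V_X\to\mathbb{Z}V_X$, $v\mapsto\sum_{e:o(e)=v}t(e)$; Bowen--Franks operator $\mathcal{BF}_X=\mathcal{I}-\mathcal{A}_X$; $\mathrm{BF}(X)=\mathrm{coker}(\mathcal{BF}_X)$. $g_X(u)=\det(\mathcal{I}-\mathcal{A}_Xu)\in\mathbb{Z}[u]$; $r_X=\mathrm{ord}_{u=1}g_X(u)$; $g_X^*(1)$ is the first non-vanishing coefficient of the Taylor expansion of $g_X$ at $u=1$ (i.e. the coefficient of $(u-1)^{r_X}$). $\delta(X)=r_X-\mathrm{rank}_{\mathbb{Z}}\mathrm{BF}(X)$. *)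

(* Defs.v *)
From HB Require Import structures.
From mathcomp Require Import all_boot all_order all_algebra.
Set Implicit Arguments. Unset Strict Implicit. Unset Printing Implicit Defensive.
Import Order.TTheory GRing.Theory Num.Theory.
Local Open Scope ring_scope.

(* A finite digraph: finite vertex type V, finite edge type E, incidence maps
   o (origin) and t (terminus).  Multiple edges and loops are allowed. *)

Definition edge_rel (V E : finType) (o t : E -> V) : rel V :=
  fun x y => [exists e : E, (o e == x) && (t e == y)].

Definition strongly_connected (V E : finType) (o t : E -> V) : Prop :=
  forall v w : V, v != w -> connect (edge_rel o t) v w.

(* adjacency operator A_X : Z V -> Z V, v |-> sum_{o(e)=v} t(e), as a matrix
   acting on row vectors (x |-> x *m A), vertices indexed via enum_val:
   entry (i,j) = number of edges from vertex i to vertex j. *)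
Definition adjmx (V E : finType) (o t : E -> V) : 'M[int]_#|V| :=
  \matrix_(i, j) (#|[set e : E | (o e == enum_val i) && (t e == enum_val j)]|)%:Z.

Definition BFop (V E : finType) (o t : E -> V) : 'M[int]_#|V| :=
  1%:M - adjmx o t.

Definition gX (V E : finType) (o t : E -> V) : {poly int} :=
  \det (1%:M - 'X *: map_mx polyC (adjmx o t)).

Definition taylor1 (p : {poly int}) : {poly int} := p \Po ('X + 1).

Definition ord_at1 (p : {poly int}) : nat :=
  find (fun c : int => c != 0) (taylor1 p).

Definition lead_at1 (p : {poly int}) : int := (taylor1 p)`_(ord_at1 p).

(* Cokernel of M : Z^n -> Z^n (row vectors, x |-> x *m M) *)
Definition in_img (n : nat) (M : 'M[int]_n) (y : 'rV[int]_n) : Prop :=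
  exists x : 'rV[int]_n, y = x *m M.

Definition is_tors (n : nat) (M : 'M[int]_n) (y : 'rV[int]_n) : Prop :=
  exists k : int, k != 0 /\ in_img M (k *: y).

(* t is the cardinality of the torsion subgroup of coker M: there is a
   system of t representatives of the torsion classes, pairwise distinct
   modulo the image and covering all torsion classes. *)
Definition tors_card_is (n : nat) (M : 'M[int]_n) (t : nat) : Prop :=
  exists s : seq 'rV[int]_n,
    [/\ size s = t,
        forall y, y \in s -> is_tors M y,
        forall i j : nat, (i < size s)%N -> (j < size s)%N ->
          in_img M (nth 0 s i - nth 0 s j) -> i = j
      & forall y, is_tors M y -> exists2 z, z \in s & in_img M (y - z)].

Definition coker_indep (n k : nat) (M : 'M[int]_n) (f : 'I_k -> 'rV[int]_n) :=
  forall c : 'I_k -> int, in_img M (\sum_(i < k) c i *: f i) -> forall i, c i = 0.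

Definition coker_rank_is (n : nat) (M : 'M[int]_n) (r : nat) : Prop :=
  (exists f : 'I_r -> 'rV[int]_n, coker_indep M f) /\
  (forall f : 'I_r.+1 -> 'rV[int]_n, ~ coker_indep M f).

(* delta(X) = 0, i.e. r_X = rank_Z BF(X) *)
Definition delta_zero (V E : finType) (o t : E -> V) : Prop :=
  coker_rank_is (BFop o t) (ord_at1 (gX o t)).

(* Main.v *)
Require Import Defs.
From HB Require Import structures.
From mathcomp Require Import all_boot all_order all_algebra zify ring lra.
Set Implicit Arguments. Unset Strict Implicit. Unset Printing Implicit Defensive.
Import Order.TTheory GRing.Theory Num.Theory.
Local Open Scope ring_scope.

Lemma taylor_det n (A : 'M[int]_n) :
  taylor1 (\det (1%:M - 'X *: map_mx polyC A)) =
  \det (map_mx polyC (1%:M - A) - 'X *: map_mx polyC A).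
Proof.
rewrite /taylor1.
rewrite -det_map_mx; congr (\det _); apply/matrixP => i j; rewrite !mxE.
rewrite rmorphB rmorphM /= comp_polyX comp_polyC rmorph_nat (rmorphB polyC) /= rmorph_nat.
ring.
Qed.

Section Smith.
Variables (n : nat) (L R : 'M[int]_n) (d : seq int).
Hypotheses (uL : L \in unitmx) (uR : R \in unitmx).
Let D : 'M[int]_n := \matrix_(i, j) (d`_i *+ (i == j :> nat)).
Let M := L *m D *m R.

Lemma mulD (u : 'rV[int]_n) i : (u *m D) 0 i = u 0 i * d`_i.
Proof.
rewrite !mxE (bigD1 i) //= big1 ?addr0; first by rewrite mxE eqxx mulr1n.
by move=> j nij; rewrite mxE (_ : (j == i :> nat) = false) ?mulr0n ?mulr0 //; apply/negbTE.
Qed.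

Lemma imgP x : in_img M x <-> forall i : 'I_n, (d`_i %| (x *m invmx R) ord0 i)%Z.
Proof.
split.
  case=> y ->; move=> i.
  rewrite /M -!mulmxA mulmxV // mulmx1 mulmxA mulD.
  exact: dvdz_mull.
move=> H.
pose u : 'rV[int]_n := \row_i (((x *m invmx R) ord0 i) %/ d`_i)%Z.
have uD : u *m D = x *m invmx R.
  apply/rowP=> i; rewrite mulD mxE divzK //.
exists (u *m invmx L).
rewrite /M !mulmxA mulmxKV // uD mulmxKV //.
Qed.

Lemma mxsubE (A B : 'rV[int]_n) i : (A - B) ord0 i = A ord0 i - B ord0 i.
Proof. by rewrite !mxE. Qed.

Definition bb (i : 'I_n) : nat := if d`_i == 0 then 1%N else absz d`_i.
Definition TT := {dffun forall i : 'I_n, 'I_(bb i)}.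
Definition rep (f : TT) : 'rV[int]_n := (\row_i ((f i : nat)%:Z)) *m R.
Definition Tc : int := \prod_(i < n) (if d`_i == 0 then 1 else d`_i).

Lemma Tc_neq0 : Tc != 0.
Proof.
rewrite /Tc; apply/prodf_neq0 => i _; case: ifP => // /negbT //.
Qed.


Lemma dvd_Tc (i : 'I_n) : d`_i != 0 -> (d`_i %| Tc)%Z.
Proof.
move=> nz; rewrite /Tc (bigD1 i) //= (negbTE nz); exact: dvdz_mulr.
Qed.

Lemma repR f i : (rep f *m invmx R) ord0 i = (f i : nat)%:Z.
Proof. by rewrite /rep mulmxK // mxE. Qed.

Lemma repRB fa fb i : ((rep fa - rep fb) *m invmx R) ord0 i = (fa i : nat)%:Z - (fb i : nat)%:Z.
Proof. by rewrite /rep -mulmxBl mulmxK // !mxE. Qed.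

Lemma rep_inj fa fb : in_img M (rep fa - rep fb) -> fa = fb.
Proof.
move/imgP=> H; apply/ffunP=> i; apply/val_inj => /=.
move: (ltn_ord (fa i)) (ltn_ord (fb i)) (H i).
rewrite repRB.
move: (nat_of_ord (fa i)) (nat_of_ord (fb i)) => a b.
rewrite /bb; case: ifP => [_ | /negbT nz]; first lia.
move=> la lb /dvdzP [q Hq].
have : q = 0.
  apply/eqP; apply: contraT => qnz.
  have : `|q * d`_i| >= `|d`_i|.
    rewrite normrM ler_peMl ?normr_ge0 //.
    lia.
  rewrite -Hq.
  lia.
by move=> q0; move: Hq; rewrite q0 mul0r; lia.
Qed.

Lemma rep_tors f : is_tors M (rep f).
Proof.
exists Tc; split; first exact: Tc_neq0.
apply/imgP => i; rewrite -scalemxAl mxE repR.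
move: (ltn_ord (f i)); move: (nat_of_ord (f i)) => a.
rewrite /bb; case: ifP => [/eqP -> | /negbT nz] la.
  have -> : a = 0%N by lia.
  by rewrite mulr0 dvdz0.
exact: dvdz_mulr (dvd_Tc nz).
Qed.

Lemma card_TT : #|TT| = absz Tc.
Proof.
rewrite card_dep_ffun foldrE big_map big_enum /=.
rewrite /Tc (big_morph absz abszM (erefl : absz 1 = 1%N)).
apply: eq_bigr => i _; rewrite card_ord /bb; by case: ifP.
Qed.

Lemma tors : tors_card_is M #|TT|.
Proof.
exists (map rep (enum TT)); split.
- by rewrite size_map cardE.
- by move=> y /mapP [f _ ->]; apply: rep_tors.
- move=> i j; rewrite size_map => Hi Hj.
  have [x0 _] : exists x0 : TT, true.
    by move: Hi; case: (enum TT) => [|x _] //; exists x.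
  move=> Hij.
  rewrite (nth_map x0 _ _ Hi) (nth_map x0 _ _ Hj) in Hij.
  have /(uniqP x0) U := enum_uniq TT.
  by apply: U => //; apply: rep_inj.
- move=> y [k [knz /imgP Hk]].
  pose w := y *m invmx R.
  pose v (i : 'I_n) : nat := if d`_i == 0 then 0%N else absz (w ord0 i %% d`_i)%Z.
  have vlt i : (v i < bb i)%N.
    rewrite /v /bb; case: ifP => // /negbT nz.
    have := ltz_mod (w ord0 i) nz; have := modz_ge0 (w ord0 i) nz; lia.
  pose f : TT := [ffun i => Ordinal (vlt i)].
  exists (rep f); first by apply: map_f; rewrite mem_enum.
  apply/imgP => i; rewrite mulmxBl mxsubE -/w repR ffunE /=.
  rewrite /v; case: ifP => [/eqP d0 | /negbT nz].
    have := Hk i; rewrite d0 -scalemxAl mxE dvd0z mulf_eq0 (negbTE knz) /= => /eqP ->.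
    by rewrite subrr dvdz0.
  have Hm := modz_ge0 (w ord0 i) nz.
  have -> : (absz (w ord0 i %% d`_i)%Z)%:Z = (w ord0 i %% d`_i)%Z.
    by rewrite gez0_abs.
  rewrite {1}(divz_eq (w ord0 i) d`_i) addrK.
  exact: dvdz_mull.
Qed.

Definition Zs : {set 'I_n} := [set i : 'I_n | d`_i == 0].

Lemma rank_le k (f : 'I_k -> 'rV[int]_n) : coker_indep M f -> (k <= #|Zs|)%N.
Proof.
move=> Hind; rewrite leqNgt; apply/negP => Hlt.
pose G : 'M[int]_(k, #|Zs|) := \matrix_(j, l) (f j *m invmx R) ord0 (enum_val l).
have [L' uL' [R' uR' [d' _ HG]]] := int_Smith_normal_form G.
pose j0 : 'I_k := Ordinal Hlt.
pose c := row j0 (invmx L').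
have cG : c *m G = 0.
  rewrite /c -row_mul HG !mulmxA mulVmx // mul1mx row_mul.
  set D' := (X in row _ X).
  have -> : row j0 D' = 0.
    apply/rowP => l; rewrite !mxE.
    have -> : (j0 == l :> nat) = false by apply/negbTE; rewrite neq_ltn /= ltn_ord orbT.
    by rewrite mulr0n.
  by rewrite mul0mx.
have cnz : c != 0.
  apply/eqP => c0.
  have : c *m L' = row j0 1%:M by rewrite /c -row_mul mulVmx.
  rewrite c0 mul0mx => /rowP /(_ j0); rewrite !mxE eqxx /= => /eqP.
  by rewrite eq_sym oner_eq0.
pose a j := Tc * c ord0 j.
have Ha : in_img M (\sum_(j < k) a j *: f j).
  apply/imgP => i.
  have -> : ((\sum_(j < k) a j *: f j) *m invmx R) ord0 i
        = Tc * \sum_(j < k) c ord0 j * (f j *m invmx R) ord0 i.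
    rewrite mulmx_suml summxE mulr_sumr; apply: eq_bigr => j _.
    by rewrite -scalemxAl mxE /a mulrA.
  case: (eqVneq d`_i 0) => [d0 | nz]; last exact: dvdz_mulr (dvd_Tc nz).
  have Hi : i \in Zs by rewrite inE d0.
  have -> : \sum_(j < k) c ord0 j * (f j *m invmx R) ord0 i
           = (c *m G) ord0 (enum_rank_in Hi i).
    rewrite mxE; apply: eq_bigr => j _; congr (_ * _); rewrite /G [in RHS]mxE enum_rankK_in //.
  by rewrite cG mxE mulr0 dvdz0.
have := Hind a Ha => Hc.
move/eqP: cnz; apply; apply/rowP => j; rewrite mxE.
have := Hc j; rewrite /a => /eqP; rewrite mulf_eq0 (negbTE Tc_neq0) /= /c mxE => /eqP ->.
by rewrite mxE.
Qed.

Lemma poly_form (A : 'M[int]_n) : 1%:M - A = M ->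
  exists2 Q : {poly int},
    \det (map_mx polyC (1%:M - A) - 'X *: map_mx polyC A) = 'X^#|Zs| * Q
    & exists K : int, Q`_0 = K * Tc.
Proof.
move=> HA.
pose B := invmx L *m A *m invmx R.
have AB : A = L *m B *m R by rewrite /B !mulmxA mulmxV // mul1mx mulmxKV.
pose Pm (X : 'M[int]_n) := map_mx (@polyC int) X.
have E1 : Pm (1%:M - A) - 'X *: Pm A = Pm L *m (Pm D - 'X *: Pm B) *m Pm R.
  have PA : Pm A = Pm L *m Pm B *m Pm R by rewrite /Pm -!map_mxM -AB.
  rewrite HA PA mulmxBr mulmxBl -scalemxAr -scalemxAl.
  by rewrite /Pm /M !map_mxM.
pose e : 'rV[{poly int}]_n := \row_i (if d`_i == 0 then - 'X else 1 : {poly int}).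
pose N := \matrix_(i, j) (if d`_i == 0 then (B i j)%:P
              else (d`_i *+ (i == j :> nat))%:P - 'X * (B i j)%:P).
have E2 : Pm D - 'X *: Pm B = diag_mx e *m N.
  apply/matrixP => i j; rewrite mul_diag_mx !mxE.
  case: ifP => [/eqP -> | _]; last by rewrite mul1r.
  by rewrite mul0rn polyC0 sub0r mulNr.
have De : \det (diag_mx e) = (- 'X) ^+ #|Zs|.
  rewrite det_diag; under eq_bigr do rewrite mxE.
  rewrite -big_mkcond /= -prodr_const; apply: eq_bigl => i; by rewrite inE.
pose cv : 'rV[int]_n := \row_i (if d`_i == 0 then 1 else d`_i : int).
pose W := \matrix_(i, j) (if d`_i == 0 then B i j else (i == j :> nat)%:R : int).
have EN : map_mx (horner_eval 0) N = diag_mx cv *m W.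
  apply/matrixP => i j; rewrite mul_diag_mx !mxE horner_evalE.
  case: ifP => _; rewrite !hornerE ?mul1r //.
  by rewrite mulr_natr.
have Dc : \det (diag_mx cv) = Tc.
  by rewrite det_diag /Tc; apply: eq_bigr => i _; rewrite mxE.
have N0 : (\det N)`_0 = Tc * \det W.
  by rewrite -horner_coef0 -horner_evalE -det_map_mx EN det_mulmx Dc.
exists (((\det L * \det R) * (-1) ^+ #|Zs|)%:P * \det N).
  rewrite E1 E2 !det_mulmx De /Pm !det_map_mx /= (exprNn ('X : {poly int})) !rmorphM rmorphXn rmorphN1 /=.
  ring.
exists (\det L * \det R * (-1) ^+ #|Zs| * \det W).
rewrite coefCM N0; ring.
Qed.

Lemma main_gen (A : 'M[int]_n) : 1%:M - A = M ->
  coker_rank_is M (ord_at1 (\det (1%:M - 'X *: map_mx polyC A))) ->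
  exists tor : nat, tors_card_is M tor /\
    exists m : int, m != 0 /\ lead_at1 (\det (1%:M - 'X *: map_mx polyC A)) = m * tor%:R.
Proof.
move=> HA [[f Hf] _].
have kle := rank_le Hf.
set g := \det (1%:M - 'X *: map_mx polyC A) in kle *.
have [Q HP [K HK]] := poly_form HA.
have Ht : taylor1 g = 'X^#|Zs| * Q by rewrite /g taylor_det HP.
have g0 : g.[0] = 1.
  rewrite -horner_evalE /g -det_map_mx.
  have -> : map_mx (horner_eval 0) (1%:M - 'X *: map_mx polyC A) = 1%:M.
    apply/matrixP => i j; rewrite !mxE horner_evalE !hornerE.
    by rewrite -polyC_natr hornerC.
  exact: det1.
have tnz : taylor1 g != 0.
  apply/eqP => t0.
  have := comp_polyXaddC_K g 1; rewrite polyC1 -/(taylor1 g) t0 comp_poly0 => g00.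
  by move: g0; rewrite -g00 horner0 => /eqP; rewrite eq_sym oner_eq0.
have hasnz : has (fun c : int => c != 0) (taylor1 g).
  apply/hasP; exists (lead_coef (taylor1 g)); last by rewrite lead_coef_eq0.
  rewrite lead_coefE; apply: mem_nth.
  by rewrite prednK // size_poly_gt0.
have Hord := nth_find 0 hasnz.
have ordz : ord_at1 g = #|Zs|.
  apply/eqP; rewrite eqn_leq kle /= leqNgt; apply/negP => lt.
  move: Hord; rewrite -/(ord_at1 g).
  have -> : (taylor1 g)`_(ord_at1 g) = 0 by rewrite Ht coefXnM lt.
  by rewrite eqxx.
have Hlead : lead_at1 g = K * Tc.
  by rewrite /lead_at1 ordz Ht coefXnM ltnn subnn HK.
have leadnz : lead_at1 g != 0 by rewrite /lead_at1 /ord_at1.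
exists #|TT|; split; first exact: tors.
exists (K * sgz Tc); split.
  apply: contraNneq leadnz => m0.
  rewrite Hlead {1}(intEsg Tc) mulrA.
  have -> : K * sgz Tc = 0 by [].
  by rewrite mul0r.
rewrite Hlead {1}(intEsg Tc) card_TT natz mulrA //.
Qed.
End Smith.

Unset Implicit Arguments.
Set Strict Implicit.

Theorem theorem2p6 (V E : finType) (o t : E -> V) :
  strongly_connected o t -> delta_zero o t ->
  exists tor : nat, tors_card_is (BFop o t) tor /\
    exists m : int, m != 0 /\ lead_at1 (gX o t) = m * tor%:R.
Proof.
move=> _ Hd.
have [L uL [R uR [d _ HM]]] := int_Smith_normal_form (BFop o t).
have := @main_gen _ L R d uL uR (adjmx o t).
rewrite -HM; move=> /(_ erefl Hd).
exact.
Qed.
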